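(* For all integers $2\le k\le n$, \[ \mathbb{P}_n(S_k\cap S_{k-1})=\frac{(n-k+1)^2}{4n(n-1)}, \] i.e. the probability that both the $(k-1)$-th and $k$-th boundary steps of a uniformly random type-B permutation tableau of size $n$ are south steps equals $\frac{(n-k+1)^2}{4n(n-1)}$.
   Context: A Ferrers diagram is a left-justified array of cells whose row lengths weakly decrease from top to bottom (rows of length $0$ are allowed). Its half-perimeter is the number of rows plus the number of columns. Its southeast boundary, traversed from the northeast corner to the southwest corner, consists of $n$ unit steps, each south or west; south steps correspond to rows and west steps to columns. We write $S_k$ (resp. $W_k$) for the event that the $k$-th step is south (resp. west). If the diagram has $c$ columns, the shifted Ferrers diagram is obtained by inserting $c$ new left-justified rows above it, of lengths $c,c-1,\dots,1$ from top to bottom; the rightmost cell of each inserted row is a diagonal cell. A type-B permutation tableau of size $n$ is a filling of a shifted Ferrers diagram of half-perimeter $n$ with $0$'s and $1$'s such that: (1) every column contains at least one $1$; (2) no $0$ has both a $1$ above it in its column and a $1$ to its left in its row; (3) if a diagonal cell contains $0$ then every cell of its row contains $0$. The boundary steps of the shifted diagram are those of the underlying Ferrers diagram. Let $\mathcal{B}_n$ be the set of such tableaux and $\mathbb{P}_n$ the uniform probability measure on $\mathcal{B}_n$. *)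

(* Defs.v *)
From mathcomp Require Import all_boot all_order all_algebra.
Set Implicit Arguments. Unset Strict Implicit. Unset Printing Implicit Defensive.

(* A shifted Ferrers diagram of half-perimeter n is encoded by its boundary
   word w : n.-tuple bool, read from the NE corner to the SW corner;
   step p (0-based, p : 'I_n) is South iff w`_p = true, West otherwise.
   South step i  <-> a row of the Ferrers diagram (rows top to bottom in order
                    of i); its cells lie in the columns of the west steps j > i.
   West step j   <-> a column (columns right to left in order of j), and also
                    the inserted row of the shifted part whose diagonal cell is
                    in column j; that row has cells in columns j' >= j.
   Rows are indexed by step positions r : 'I_n; inserted rows (west r) lie
   above all original rows (south r); see aboveB for the vertical order.
   A cell is a pair (r, c) of positions.  Larger column position = further left. *)

Definition stepS n (w : n.-tuple bool) (p : 'I_n) : bool := tnth w p.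

Definition cellB n (w : n.-tuple bool) (r c : 'I_n) : bool :=
  ~~ stepS w c && (if stepS w r then r < c else r <= c)%N.

(* Inserted rows lie above original rows;
   original rows are ordered by position (top = first south step); inserted
   rows are stacked so that each column is contiguous: the inserted row with
   diagonal in the first (rightmost) column is the lowest one and spans all
   columns, the one with diagonal in the last (leftmost) column is the top one. *)
Definition aboveB n (w : n.-tuple bool) (r r' : 'I_n) : bool :=
  [|| ~~ stepS w r && stepS w r',
      [&& stepS w r, stepS w r' & (r < r')%N] |
      [&& ~~ stepS w r, ~~ stepS w r' & (r' < r)%N]].

Definition diagB n (w : n.-tuple bool) (r c : 'I_n) : bool :=
  ~~ stepS w r && (r == c).

(* a candidate tableau: boundary word and a 0/1 filling (entries outside the
   diagram are required to be 0) *)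
Definition tabB n : finType := (n.-tuple bool * {ffun 'I_n * 'I_n -> bool})%type.

Definition is_tabB n (t : tabB n) : bool :=
  let w := t.1 in let f := t.2 in
  [&&
      [forall r, forall c, f (r, c) ==> cellB w r c],
      (* (1) every column contains a 1 *)
      [forall c, ~~ stepS w c ==> [exists r, cellB w r c && f (r, c)]],
      (* (2) no 0 with a 1 above it in its column and a 1 to its left in its row *)
      [forall r, forall c, (cellB w r c && ~~ f (r, c)) ==>
         ~~ ([exists r', [&& cellB w r' c, aboveB w r' r & f (r', c)]] &&
             [exists c', [&& cellB w r c', (c < c')%N & f (r, c')]])] &
      (* (3) a 0 in a diagonal cell forces its whole row to be 0 *)
      [forall r, forall c, (diagB w r c && ~~ f (r, c)) ==>
         [forall c', cellB w r c' ==> ~~ f (r, c')]]].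

Definition BTab n : {set tabB n} := [set t | is_tabB t].

(* event S_k (k-th step, 1-based, is South) *)
Definition S_ev n (k : nat) : {set tabB n} :=
  [set t : tabB n | nth false t.1 k.-1].

Definition PB n (E : {set tabB n}) : rat :=
  (#|E :&: BTab n|%:R / #|BTab n|%:R)%R.

(* Main.v *)
Require Import Defs.
From mathcomp Require Import all_boot all_order all_algebra.
From mathcomp Require Import zify ring.
From Stdlib Require Import FunctionalExtensionality.
Set Implicit Arguments. Unset Strict Implicit. Unset Printing Implicit Defensive.

Section Abs.
Variable T : finType.

Lemma sub_split (F : {set T}) m (P : {set T} -> bool) (G : {set T} -> nat) : m \in F ->
  \sum_(Y : {set T} | (Y \subset F) && P Y) G Y =
  \sum_(Z : {set T} | (Z \subset F :\ m) && P (m |: Z)) G (m |: Z) +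
  \sum_(Y : {set T} | (Y \subset F :\ m) && P Y) G Y.
Proof.
move=> mF.
rewrite (bigID (fun Y : {set T} => m \in Y)) /=; congr (_ + _).
  rewrite (reindex_onto (fun Z => m |: Z) (fun Y => Y :\ m)); last first.
    by move=> Y /andP[_ mY]; rewrite setD1K.
  apply: eq_bigl => Z; rewrite setU11 andbT.
  case mZ: (m \in Z).
    have -> : ((m |: Z) :\ m == Z) = false.
      by apply/negbTE/eqP => h; move: mZ; rewrite -h setD11.
    by rewrite andbF subsetD1 mZ andbF.
  rewrite (setU1K (negbT mZ)) eqxx andbT subsetD1 mZ andbT.
  by rewrite subUset sub1set mF.
apply: eq_bigl => Y; rewrite subsetD1.
by case: (Y \subset F); case: (P Y); case: (m \in Y).
Qed.

Lemma L1 (F : {set T}) b : \sum_(Y : {set T} | Y \subset F) b ^ #|Y| = b.+1 ^ #|F|.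
Proof.
move: {2}#|F| (erefl #|F|) => N; elim: N F => [|N IH] F hF.
  move: hF => /eqP; rewrite cards_eq0 => /eqP ->.
  rewrite (big_pred1 set0) ?cards0 // => Y; by rewrite subset0.
have: (0 < #|F|) by rewrite hF.
rewrite card_gt0 => /set0Pn [m mF].
have hF' : #|F :\ m| = N by move: hF; rewrite (cardsD1 m) mF => [[]].
rewrite (eq_bigl (fun Y : {set T} => (Y \subset F) && true)); last by move=> Y; rewrite andbT.
rewrite (sub_split _ _ mF).
under eq_bigl => Y do rewrite andbT.
under [X in _ + X]eq_bigl => Y do rewrite andbT.
rewrite IH //.
rewrite (eq_bigr (fun Z : {set T} => b * b ^ #|Z|)); last first.
  move=> Z hZ; rewrite cardsU1.
  have -> : m \notin Z by apply/negP => mZ; move: hZ => /subsetP /(_ m mZ); rewrite setD11.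
  by rewrite add1n expnS.
by rewrite -big_distrr /= IH // hF hF' expnS mulSn addnC.
Qed.

Definition cnt (key : T -> nat) (F Y : {set T}) :=
  [set r in F | (r \in Y) || ~~ [exists r', (r' \in Y) && (key r < key r')]].

Lemma L2 (key : T -> nat) (ki : injective key) (F : {set T}) b :
  \sum_(Y : {set T} | (Y \subset F) && (Y != set0)) b ^ #|cnt key F Y| + b ^ #|F|.+1
  = b * b.+1 ^ #|F|.
Proof.
move: {2}#|F| (erefl #|F|) => N; elim: N F => [|N IH] F hF.
  move: hF => /eqP; rewrite cards_eq0 => /eqP ->.
  rewrite big_pred0 ?cards0 ?muln1 // => Y; rewrite subset0; by case: (Y == set0).
have: (0 < #|F|) by rewrite hF.
rewrite card_gt0 => /set0Pn [m0 m0F].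
pose m := [arg min_(r < m0 in F) key r].
have [mF minm] : m \in F /\ forall r, r \in F -> key m <= key r.
  by rewrite /m; case: arg_minnP => // i iF H; split.
have hF' : #|F :\ m| = N by move: hF; rewrite (cardsD1 m) mF => [[]].
have mF' : m \notin F :\ m by rewrite setD11.
rewrite (sub_split _ _ mF).
rewrite (eq_bigr (fun Z : {set T} => b * b ^ #|cnt key (F :\ m) Z|)); last first.
  move=> Z /andP[hZ _].
  have -> : cnt key F (m |: Z) = m |: cnt key (F :\ m) Z.
    apply/setP => r; rewrite !inE.
    case: (eqVneq r m) => [->|rm] /=; first by rewrite mF.
    case rF: (r \in F) => //=; congr (_ || ~~ _).
    apply/existsP/existsP => [[r' /andP[]]|[r' /andP[h1 h2]]].
      rewrite !inE => /orP[/eqP ->|h1] h2; last by exists r'; rewrite h1.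
      by move: h2; rewrite ltnNge minm.
    by exists r'; rewrite !inE h1 orbT.
  rewrite cardsU1.
  have -> : m \notin cnt key (F :\ m) Z by rewrite inE (negbTE mF').
  by rewrite add1n expnS.
rewrite -big_distrr /=.
have hne : forall Z : {set T}, (m |: Z != set0) = true.
  by move=> Z; apply/set0Pn; exists m; rewrite setU11.
under eq_bigl => Z do rewrite hne andbT.
rewrite (bigD1 set0) ?sub0set //=.
have -> : cnt key (F :\ m) set0 = F :\ m.
  by apply/setP => r; rewrite !inE /=; case: existsP => [[r']|_]; [rewrite inE | rewrite andbT].
rewrite (eq_bigr (fun Y : {set T} => b ^ #|cnt key (F :\ m) Y|) (P := fun Y : {set T} => (Y \subset F :\ m) && (Y != set0))); last first.
  move=> Y /andP[hY Y0]; suff -> : cnt key F Y = cnt key (F :\ m) Y by [].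
  apply/setP => r; rewrite !inE.
  case: (eqVneq r m) => [->|rm] /=; last by [].
  rewrite mF /=; have /set0Pn [y yY] := Y0.
  have yF : y \in F :\ m by apply: (subsetP hY).
  have ym : y != m by move: yF; rewrite !inE => /andP[h _].
  have my : key m < key y.
    rewrite ltn_neqAle minm; last by move: yF; rewrite !inE => /andP[_ h].
    by rewrite andbT; apply/negP => /eqP /ki /eqP; rewrite eq_sym (negbTE ym).
  have -> : m \in Y = false by apply/negP => mY; move/subsetP: hY => /(_ m mY); rewrite (negbTE mF').
  rewrite /=; apply/negbF/existsP; exists y; by rewrite yY.
set Q := \sum_(i | _) _.
have IH' := IH _ hF'.
rewrite hF' in IH'.
rewrite hF; move: IH'; rewrite /Q; set Q' := \sum_(i | _) _.
rewrite !expnS.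
move=> IH'.
rewrite hF'.
move: IH'; set x := b ^ N; set y := b.+1 ^ N; move: Q' x y => Q' x y IH'.
nia.
Qed.
End Abs.

Section Main.
Variable n : nat.
Notation word := (n.-tuple bool).
Notation fill := {ffun 'I_n * 'I_n -> bool}.

Definition colok (p : nat) (w : word) (c : 'I_n) := (c < p) && ~~ stepS w c.

Definition Acol (w : word) (f : fill) (r c : 'I_n) :=
  [exists r' : 'I_n, [&& cellB w r' c, aboveB w r' r & f (r', c)]].

Definition inT (p : nat) (w : word) (f : fill) : bool :=
  [&& [forall r : 'I_n, forall c : 'I_n, f (r, c) ==> cellB w r c && colok p w c],
      [forall c : 'I_n, colok p w c ==> [exists r : 'I_n, cellB w r c && f (r, c)]],
      [forall r : 'I_n, forall c : 'I_n, [&& colok p w c, cellB w r c & ~~ f (r, c)] ==>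
         ~~ (Acol w f r c &&
             [exists c' : 'I_n, [&& colok p w c' && cellB w r c', (c < c') & f (r, c')]])] &
      [forall r : 'I_n, forall c : 'I_n, [&& colok p w c, diagB w r c & ~~ f (r, c)] ==>
         [forall c' : 'I_n, colok p w c' && cellB w r c' ==> ~~ f (r, c')]]].

Definition frozen (p : nat) (w : word) (f : fill) (r : 'I_n) :=
  [exists c : 'I_n, [&& colok p w c, cellB w r c, ~~ f (r, c) & Acol w f r c]].

Definition freeS (p : nat) (w : word) (f : fill) : {set 'I_n} :=
  [set r : 'I_n | [&& (r < p), ~~ (~~ stepS w r && ~~ f (r, r)) & ~~ frozen p w f r]].

Lemma cell_le w (r c : 'I_n) : cellB w r c -> r <= c.
Proof. rewrite /cellB; case: (stepS w r); case: (stepS w c) => //= /ltnW //. Qed.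

Lemma cell_W w (r c : 'I_n) : cellB w r c -> stepS w c = false.
Proof. by rewrite /cellB; case: (stepS w c). Qed.

Lemma cell_colp w (p r : 'I_n) : stepS w p = false -> r <= p -> cellB w r p.
Proof.
move=> hp hr; rewrite /cellB hp /=; case: ifP => // hs.
rewrite ltn_neqAle hr andbT; apply/negP => /eqP /val_inj e; by move: hs; rewrite e hp.
Qed.

Definition key (w : word) (r : 'I_n) : nat := if stepS w r then n - r else n.+1 + r.

Lemma key_inj w : injective (key w).
Proof.
move=> r r'; rewrite /key; have := ltn_ord r; have := ltn_ord r'.
case: (stepS w r); case: (stepS w r') => h1 h2 e; apply: val_inj => /=; lia.
Qed.

Lemma aboveB_key w (r r' : 'I_n) : aboveB w r' r = (key w r < key w r').
Proof.
rewrite /aboveB /key; have := ltn_ord r; have := ltn_ord r'.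
case: (stepS w r); case: (stepS w r') => h1 h2 /=; apply/idP/idP; lia.
Qed.


Section Agree.
Variables (p : nat) (w w' : word).
Hypothesis hag : forall i : 'I_n, i < p -> stepS w i = stepS w' i.

Lemma cell_agree (r c : 'I_n) : c < p -> cellB w r c = cellB w' r c.
Proof.
move=> hc; rewrite /cellB (hag hc).
case: (leqP r c) => hrc; first by rewrite (hag (leq_ltn_trans hrc hc)).
have H : (r < c) = false by apply/negbTE; rewrite -leqNgt ltnW.
by rewrite H; case: (stepS w r); case: (stepS w' r).
Qed.

Lemma colok_agree (c : 'I_n) : colok p w c = colok p w' c.
Proof. rewrite /colok; case: (ltnP c p) => hc //=; by rewrite hag. Qed.

Lemma cellcol_agree (r c : 'I_n) :
  cellB w r c && colok p w c = cellB w' r c && colok p w' c.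
Proof.
rewrite colok_agree; case hc: (colok p w' c); rewrite ?andbF ?andbT //.
by apply: cell_agree; move: hc => /andP[].
Qed.

Lemma above_agree (r r' : 'I_n) : r < p -> r' < p -> aboveB w r r' = aboveB w' r r'.
Proof. by move=> h1 h2; rewrite /aboveB !hag. Qed.

Lemma Acol_agree (f : fill) (r c : 'I_n) : c < p -> r <= c -> Acol w f r c = Acol w' f r c.
Proof.
move=> hc hrc; apply: eq_existsb => r'.
rewrite -(cell_agree r' hc); case E: (cellB w r' c) => //=.
rewrite above_agree //; first by apply: leq_ltn_trans hc; exact: cell_le E.
by apply: leq_ltn_trans hc.
Qed.

Lemma inT_agree f : inT p w f = inT p w' f.
Proof.
rewrite /inT; congr [&& _, _, _ & _].
- by apply: eq_forallb => r; apply: eq_forallb => c; rewrite cellcol_agree.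
- apply: eq_forallb => c; rewrite colok_agree; case hc: (colok p w' c) => //=.
  have hcp : c < p by move: hc => /andP[].
  by apply: eq_existsb => r; rewrite cell_agree.
- apply: eq_forallb => r; apply: eq_forallb => c.
  rewrite colok_agree; case hc: (colok p w' c) => //=.
  have hcp : c < p by move: hc => /andP[].
  rewrite cell_agree //; case hrc: (cellB w' r c) => //=.
  have hr : r <= c by exact: cell_le hrc.
  rewrite Acol_agree //; congr (_ ==> ~~ (_ && _)).
  by apply: eq_existsb => c'; rewrite (andbC (colok p w c')) (andbC (colok p w' c')) cellcol_agree.
- apply: eq_forallb => r; apply: eq_forallb => c.
  rewrite colok_agree; case hc: (colok p w' c) => //=.
  have hcp : c < p by move: hc => /andP[].
  rewrite /diagB; case hrc: (r == c); rewrite ?andbF ?andFb //=.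
  rewrite hag; last by rewrite (eqP hrc).
  congr (_ ==> _); apply: eq_forallb => c'.
  by rewrite (andbC (colok p w c')) (andbC (colok p w' c')) cellcol_agree.
Qed.

Lemma freeS_agree f : freeS p w f = freeS p w' f.
Proof.
apply/setP => r; rewrite !inE; case hr: (r < p) => //=.
rewrite hag //; congr (_ && ~~ _).
rewrite /frozen; apply: eq_existsb => c.
rewrite colok_agree; case hc: (colok p w' c) => //=.
have hcp : c < p by move: hc => /andP[].
rewrite cell_agree //; case hrc: (cellB w' r c) => //=.
by rewrite Acol_agree // (cell_le hrc).
Qed.
End Agree.

Section Step.
Variables (w : word) (p : 'I_n).

Lemma colok_S : stepS w p -> colok p.+1 w = colok p w.
Proof.
move=> hp; apply: functional_extensionality => c; rewrite /colok.
case: (eqVneq c p) => [->|hcp]; first by rewrite hp !andbF.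
have hcp' : (nat_of_ord c == p) = false := negbTE hcp.
by rewrite ltnS leq_eqVlt hcp'.
Qed.

Lemma colok_W (c : 'I_n) : stepS w p = false -> colok p.+1 w c = (c == p) || colok p w c.
Proof.
move=> hp; rewrite /colok; case: (eqVneq c p) => [->|hcp]; first by rewrite hp ltnSn.
have hcp' : (nat_of_ord c == p) = false := negbTE hcp.
by rewrite ltnS leq_eqVlt hcp'.
Qed.

Lemma freeS_ltp (f : fill) (r : 'I_n) : r \in freeS p w f -> r < p.
Proof. by rewrite inE => /and3P[]. Qed.

Lemma p_notin_freeS (f : fill) : p \notin freeS p w f.
Proof. by apply/negP => /freeS_ltp; rewrite ltnn. Qed.

Lemma inT_S (f : fill) : stepS w p -> inT p.+1 w f = inT p w f.
Proof. by move=> hp; rewrite /inT colok_S. Qed.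

Lemma freeS_S (f : fill) : stepS w p -> freeS p.+1 w f = p |: freeS p w f.
Proof.
move=> hp; apply/setP => r; rewrite !inE /frozen colok_S //.
case: (eqVneq r p) => [->|hrp] /=.
  rewrite ltnSn hp /=; apply/negP => /existsP [c /and4P[/andP[hc _] hrc _ _]].
  by move: hrc; rewrite /cellB hp => /andP[_ /(ltn_trans hc)]; rewrite ltnn.
have hrp' : (nat_of_ord r == p) = false := negbTE hrp.
by rewrite ltnS leq_eqVlt hrp'.
Qed.

Lemma card_freeS_S (f : fill) : stepS w p -> #|freeS p.+1 w f| = #|freeS p w f|.+1.
Proof. by move=> hp; rewrite freeS_S // cardsU1 p_notin_freeS. Qed.

End Step.

Section Fiber.
Variables (w : word) (p : 'I_n).
Hypothesis hW : stepS w p = false.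

Definition ext (f : fill) (X : {set 'I_n}) : fill :=
  [ffun rc : 'I_n * 'I_n => if rc.2 == p then rc.1 \in X else f rc].

Lemma extE (f : fill) (X : {set 'I_n}) (r c : 'I_n) : ext f X (r, c) = if c == p then r \in X else f (r, c).
Proof. by rewrite ffunE. Qed.

Lemma extN (f : fill) (X : {set 'I_n}) (r c : 'I_n) : c != p -> ext f X (r, c) = f (r, c).
Proof. by move=> h; rewrite extE (negbTE h). Qed.

Lemma extP (f : fill) (X : {set 'I_n}) (r : 'I_n) : ext f X (r, p) = (r \in X).
Proof. by rewrite extE eqxx. Qed.

Lemma Acol_ext (f : fill) (X : {set 'I_n}) (r c : 'I_n) : c != p -> Acol w (ext f X) r c = Acol w f r c.
Proof. by move=> h; apply: eq_existsb => r'; rewrite extN. Qed.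

Lemma colok_ne (c : 'I_n) : colok p w c -> c != p.
Proof. by move=> /andP[h _]; apply/negP => /eqP e; move: h; rewrite e ltnn. Qed.

Lemma colokS_of (c : 'I_n) : colok p w c -> colok p.+1 w c.
Proof. by move=> h; rewrite colok_W // h orbT. Qed.

Lemma colokSp : colok p.+1 w p.
Proof. by rewrite colok_W // eqxx. Qed.

Lemma colokS_ne (c : 'I_n) : colok p.+1 w c -> c != p -> colok p w c.
Proof. by rewrite colok_W // => /orP[->|]. Qed.

Lemma inT_col (f : fill) (r : 'I_n) : inT p w f -> f (r, p) = false.
Proof.
move=> /and4P[/forallP /(_ r) /forallP /(_ p) H _ _ _].
by apply/negbTE/negP => /(implyP H) /andP[_ /colok_ne]; rewrite eqxx.
Qed.

Lemma fiber (f : fill) (X : {set 'I_n}) : (forall r, f (r, p) = false) ->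
  inT p.+1 w (ext f X) = [&& inT p w f, X \subset p |: freeS p w f & X != set0].
Proof.
move=> f0; apply/idP/idP.
- move=> /and4P[/forallP H0 /forallP H1 /forallP H2 /forallP H3].
  have H0' r c : ext f X (r, c) -> cellB w r c && colok p.+1 w c.
    by move: (H0 r) => /forallP /(_ c) /implyP.
  have H2' r c : [&& colok p.+1 w c, cellB w r c & ~~ ext f X (r, c)] ->
    ~~ (Acol w (ext f X) r c && [exists c', [&& colok p.+1 w c' && cellB w r c', (c < c') & ext f X (r, c')]]).
    by move: (H2 r) => /forallP /(_ c) /implyP.
  have H3' r c : [&& colok p.+1 w c, diagB w r c & ~~ ext f X (r, c)] ->
    [forall c', colok p.+1 w c' && cellB w r c' ==> ~~ ext f X (r, c')].
    by move: (H3 r) => /forallP /(_ c) /implyP.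
  apply/and3P; split.
  + apply/and4P; split.
    * apply/forallP => r; apply/forallP => c; apply/implyP => frc.
      have cp : c != p by apply/negP => /eqP e; move: frc; rewrite e f0.
      move: (H0' r c); rewrite extN // => /(_ frc) /andP[-> h] /=.
      exact: colokS_ne.
    * apply/forallP => c; apply/implyP => hc.
      move: (H1 c) => /implyP /(_ (colokS_of hc)) /existsP [r /andP[hrc hg]].
      by apply/existsP; exists r; rewrite hrc -(extN f X r (colok_ne hc)).
    * apply/forallP => r; apply/forallP => c; apply/implyP => /and3P[hc hrc hf].
      have cp := colok_ne hc.
      apply/negP => /andP[hA /existsP [c' /and3P[/andP[hc' hrc'] hcc' hf']]].
      have c'p := colok_ne hc'.
      move: (H2' r c); rewrite (colokS_of hc) hrc extN // hf => /(_ isT).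
      rewrite Acol_ext // hA /=; apply/negP/negPn/existsP; exists c'.
      by rewrite (colokS_of hc') hrc' hcc' extN.
    * apply/forallP => r; apply/forallP => c; apply/implyP => /and3P[hc hd hf].
      have cp := colok_ne hc.
      move: (H3' r c); rewrite (colokS_of hc) hd extN // hf => /(_ isT) /forallP H.
      apply/forallP => c'; apply/implyP => /andP[hc' hrc'].
      by move: (H c'); rewrite (colokS_of hc') hrc' extN ?(colok_ne hc').
  + apply/subsetP => r rX; rewrite !inE.
    case: (eqVneq r p) => [//|rp] /=.
    have hrp : cellB w r p by move: (H0' r p); rewrite extP => /(_ rX) /andP[].
    have rltp : r < p.
      by rewrite ltn_neqAle (cell_le hrp) andbT; apply: contra_neq rp => e; apply: val_inj.
    rewrite rltp /=; apply/andP; split.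
    * apply/negP => /andP[hSr hfr].
      have hcr : colok p.+1 w r by rewrite colok_W // /colok rltp hSr orbT.
      move: (H3' r r); rewrite /diagB hSr eqxx extN // hfr hcr => /(_ isT) /forallP /(_ p).
      by rewrite colokSp hrp extP rX.
    * apply/negP => /existsP [c /and4P[hc hrc hf hA]].
      have cp := colok_ne hc.
      move: (H2' r c); rewrite (colokS_of hc) hrc extN // hf => /(_ isT).
      rewrite Acol_ext // hA /=; apply/negP/negPn/existsP; exists p.
      rewrite colokSp hrp extP rX andbT /=.
      by move: hc => /andP[-> _].
  + move: (H1 p); rewrite colokSp => /implyP /(_ isT) /existsP [r /andP[_]].
    by rewrite extP => rX; apply/set0Pn; exists r.
- move=> /and3P[Hf HX Hne].
  move: (Hf) => /and4P[/forallP F0 /forallP F1 /forallP F2 /forallP F3].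
  have F0' r c : f (r, c) -> cellB w r c && colok p w c.
    by move: (F0 r) => /forallP /(_ c) /implyP.
  have F2' r c : [&& colok p w c, cellB w r c & ~~ f (r, c)] ->
    ~~ (Acol w f r c && [exists c', [&& colok p w c' && cellB w r c', (c < c') & f (r, c')]]).
    by move: (F2 r) => /forallP /(_ c) /implyP.
  have F3' r c : [&& colok p w c, diagB w r c & ~~ f (r, c)] ->
    [forall c', colok p w c' && cellB w r c' ==> ~~ f (r, c')].
    by move: (F3 r) => /forallP /(_ c) /implyP.
  have Xle r : r \in X -> r <= p.
    move/(subsetP HX); rewrite in_setU1 => /orP[/eqP -> //|/freeS_ltp]; exact: ltnW.
  have Xcell r : r \in X -> cellB w r p by move=> /Xle; exact: cell_colp.
  have Xfree r : r \in X -> r != p -> r \in freeS p w f.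
    by move/(subsetP HX); rewrite in_setU1 => /orP[/eqP ->|//]; rewrite eqxx.
  apply/and4P; split.
  + apply/forallP => r; apply/forallP => c; apply/implyP.
    rewrite extE; case: (eqVneq c p) => [->|cp].
      by move=> rX; rewrite Xcell // colokSp.
    by move=> /F0' /andP[-> /colokS_of].
  + apply/forallP => c; apply/implyP => hc.
    case: (eqVneq c p) => [->|cp].
      by case/set0Pn: Hne => r rX; apply/existsP; exists r; rewrite Xcell // extP.
    have /(implyP (F1 c)) /existsP [r /andP[hrc hf]] := colokS_ne hc cp.
    by apply/existsP; exists r; rewrite hrc extN.
  + apply/forallP => r; apply/forallP => c; apply/implyP => /and3P[hc hrc hg].
    case: (eqVneq c p) => [ecp|cp].
      apply/negP => /andP[_ /existsP [c' /and3P[/andP[hc' _] hcc' _]]].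
      move: hc'; rewrite /colok ltnS => /andP[hc'p _].
      by move: (leq_trans hcc' hc'p); rewrite ecp ltnn.
    have hcp := colokS_ne hc cp.
    rewrite extN // in hg; rewrite Acol_ext //.
    apply/negP => /andP[hA /existsP [c' /and3P[/andP[hc' hrc'] hcc' hg']]].
    case: (eqVneq c' p) => [ec'|c'p].
      rewrite ec' extP in hg'.
      have rp : r != p.
        apply/negP => /eqP er; move: (cell_le hrc); rewrite er leqNgt.
        by move: hcp => /andP[->].
      move: (Xfree r hg' rp); rewrite inE => /and3P[_ _ /negP]; apply.
      by apply/existsP; exists c; rewrite hcp hrc hg hA.
    move: (F2' r c); rewrite hcp hrc hg => /(_ isT) /negP; apply.
    rewrite hA /=; apply/existsP; exists c'.
    by rewrite (colokS_ne hc' c'p) hrc' hcc' -(extN f X r c'p).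
  + apply/forallP => r; apply/forallP => c; apply/implyP => /and3P[hc hd hg].
    move: (hd); rewrite /diagB => /andP[hSr /eqP erc].
    apply/forallP => c'; apply/implyP => /andP[hc' hrc'].
    case: (eqVneq c p) => [ecp|cp].
      have erp : r = p by apply: val_inj; rewrite erc ecp.
      have hg' : p \notin X by move: hg; rewrite erp ecp extP.
      rewrite erp in hrc' *.
      rewrite extE; case: (eqVneq c' p) => [_ //|c'p].
      have := colokS_ne hc' c'p; move/andP => [hlt _].
      by move: (cell_le hrc'); rewrite leqNgt hlt.
    have hcp := colokS_ne hc cp.
    rewrite extN // in hg.
    rewrite extE; case: (eqVneq c' p) => [_|c'p].
      apply/negP => rX.
      have rp : r != p by rewrite erc.
      move: (Xfree r rX rp); rewrite inE => /and3P[_ /negP H _]; apply: H.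
      by rewrite hSr /=; rewrite [X in f (r, X)]erc.
    move: (F3' r c); rewrite hcp hd hg => /(_ isT) /forallP /(_ c') /implyP; apply.
    by rewrite (colokS_ne hc' c'p) hrc'.
Qed.

Lemma frozen_ext (f : fill) (X : {set 'I_n}) (r : 'I_n) :
  X \subset p |: freeS p w f -> r < p ->
  frozen p.+1 w (ext f X) r =
  frozen p w f r || (r \notin X) && [exists r', (r' \in X) && aboveB w r' r].
Proof.
move=> HX rp.
have Xcell r' : r' \in X -> cellB w r' p.
  move=> /(subsetP HX); rewrite in_setU1 => /orP[/eqP -> |/freeS_ltp h].
    exact: cell_colp.
  by apply: cell_colp => //; apply: ltnW.
apply/existsP/orP.
- move=> [c /and4P[hc hrc hg hA]].
  case: (eqVneq c p) => [ecp|cp].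
    rewrite ecp extP in hg; right; rewrite hg /=.
    move: hA; rewrite ecp => /existsP [r' /and3P[_ hab]]; rewrite extP => r'X.
    by apply/existsP; exists r'; rewrite r'X hab.
  left; apply/existsP; exists c.
  by rewrite (colokS_ne hc cp) hrc -(extN f X r cp) hg -(Acol_ext f X r cp) hA.
- move=> [/existsP [c /and4P[hc hrc hf hA]] | /andP[rX /existsP [r' /andP[r'X hab]]]].
    have cp := colok_ne hc.
    by exists c; rewrite (colokS_of hc) hrc extN // hf Acol_ext.
  exists p; rewrite colokSp cell_colp ?(ltnW rp) // extP rX /=.
  by apply/existsP; exists r'; rewrite Xcell // hab extP.
Qed.

Lemma freeS_ext (f : fill) (X : {set 'I_n}) :
  X \subset p |: freeS p w f ->
  freeS p.+1 w (ext f X) =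
  [set r | (r == p) && (p \in X)] :|:
  [set r in freeS p w f | (r \in X) || ~~ [exists r', (r' \in X) && aboveB w r' r]].
Proof.
move=> HX; apply/setP => r; rewrite in_setU !in_set.
case: (eqVneq r p) => [->|rp] /=.
  rewrite ltnSn hW extP ltnn /= orbF.
  case pX: (p \in X) => //=; apply/negP => /existsP [c /and4P[hc hrc hg _]].
  have cp : c == p.
    move: hc; rewrite /colok ltnS => /andP[h _].
    by apply/eqP/val_inj/eqP; rewrite eqn_leq h (cell_le hrc).
  by move: hg; rewrite (eqP cp) extP pX.
have hrp' : (nat_of_ord r == p) = false := negbTE rp.
rewrite ltnS leq_eqVlt hrp' /=.
case rlt: (r < p) => //=.
rewrite frozen_ext // extN //.
by case: (frozen p w f r); case: (r \in X); case: [exists r', _]; rewrite /= ?andbF ?andbT.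
Qed.

Definition res (g : fill) : fill := [ffun rc : 'I_n * 'I_n => g rc && (rc.2 != p)].
Definition col (g : fill) : {set 'I_n} := [set r | g (r, p)].

Lemma ext_res_col (g : fill) : ext (res g) (col g) = g.
Proof.
apply/ffunP => -[r c]; rewrite extE ffunE /=.
case: (eqVneq c p) => [->|cp]; first by rewrite inE.
by rewrite andbT.
Qed.

Lemma col_ext (f : fill) (X : {set 'I_n}) : col (ext f X) = X.
Proof. by apply/setP => r; rewrite inE extP. Qed.

Lemma res_ext (f : fill) (X : {set 'I_n}) : (forall r, f (r, p) = false) -> res (ext f X) = f.
Proof.
move=> f0; apply/ffunP => -[r c]; rewrite ffunE extE /=.
case: (eqVneq c p) => [->|cp]; first by rewrite f0 andbF.
by rewrite andbT.
Qed.

Lemma res_ext_col (f : fill) (X : {set 'I_n}) (r : 'I_n) : res (ext f X) (r, p) = false.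
Proof. by rewrite ffunE /= eqxx andbF. Qed.

Lemma above_p (r : 'I_n) : r < p -> aboveB w p r.
Proof. by move=> rp; rewrite /aboveB hW /=; case: (stepS w r); rewrite //= rp. Qed.

Lemma sumW b :
  \sum_(g | inT p.+1 w g) b ^ #|freeS p.+1 w g| +
  \sum_(f | inT p w f) b ^ (#|freeS p w f|).+1 =
  \sum_(f | inT p w f) 2 * b * b.+1 ^ #|freeS p w f|.
Proof.
rewrite (reindex_onto (fun j : fill * {set 'I_n} => ext j.1 j.2) (fun g => (res g, col g)));
  last by move=> g _; exact: ext_res_col.
rewrite (eq_bigl (fun j : fill * {set 'I_n} =>
  inT p w j.1 && ((j.2 \subset p |: freeS p w j.1) && (j.2 != set0)))); last first.
  move=> [f X] /=; rewrite col_ext xpair_eqE eqxx andbT.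
  case f0: [forall r, f (r, p) == false].
    have f0' r : f (r, p) = false by apply/eqP; move/forallP: f0; apply.
    by rewrite fiber // res_ext // eqxx andbT.
  have nT : inT p w f = false.
    apply/negP => H; move/negP: f0; apply; apply/forallP => r; by rewrite inT_col.
  rewrite nT; apply/negP => /andP[_ /eqP e].
  move/negP: f0; apply; apply/forallP => r; by rewrite -e res_ext_col.
rewrite -(pair_big_dep (fun f : fill => inT p w f)
  (fun f (X : {set 'I_n}) => (X \subset p |: freeS p w f) && (X != set0))
  (fun f (X : {set 'I_n}) => b ^ #|freeS p.+1 w (ext f X)|)) /=.
rewrite -big_split; apply: eq_bigr => f Hf /=.
set F := freeS p w f.
have pF : p \notin F by exact: p_notin_freeS.
rewrite (eq_bigr (fun X : {set 'I_n} => b ^ #|[set r | (r == p) && (p \in X)] :|: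
   [set r in F | (r \in X) || ~~ [exists r', (r' \in X) && aboveB w r' r]]|)); last first.
  by move=> X /andP[HX _]; rewrite freeS_ext.
have Flt r : r \in F -> r < p by exact: freeS_ltp.
clearbody F.
rewrite (sub_split _ _ (setU11 p F)) (setU1K pF).
rewrite (eq_bigr (fun Z : {set 'I_n} => b * b ^ #|Z|)); last first.
  move=> Z /andP[hZ _].
  have pZ : p \notin Z by apply/negP => /(subsetP hZ); rewrite (negbTE pF).
  have -> : [set r | (r == p) && (p \in p |: Z)] = [set p].
    by rewrite setU11; apply/setP => r; rewrite !inE andbT.
  have -> : [set r in F | (r \in p |: Z) || ~~ [exists r', (r' \in p |: Z) && aboveB w r' r]] = Z.
    apply/setP => r; rewrite !inE.
    case rZ: (r \in Z); first by rewrite orbT orTb andbT; apply: (subsetP hZ).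
    rewrite orbF; case rF: (r \in F); rewrite ?andbF ?andFb //=.
    have rp : r != p by apply/negP => /eqP e; move: pF; rewrite -e rF.
    rewrite (negbTE rp) /=; apply/negbF/existsP; exists p.
    by rewrite setU11 above_p // Flt.
  by rewrite cardsU1 pZ add1n expnS.
have hne (Z : {set 'I_n}) : (p |: Z != set0) = true.
  by apply/set0Pn; exists p; rewrite setU11.
under eq_bigl => Z do rewrite hne andbT.
rewrite -big_distrr /= L1.
rewrite (eq_bigr (fun Y : {set 'I_n} => b ^ #|cnt (key w) F Y|)); last first.
  move=> Y /andP[hY _].
  have pY : p \notin Y by apply/negP => /(subsetP hY); rewrite (negbTE pF).
  have -> : [set r | (r == p) && (p \in Y)] = set0.
    by apply/setP => r; rewrite !inE (negbTE pY) andbF.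
  rewrite set0U.
  suff -> : [set r in F | (r \in Y) || ~~ [exists r', (r' \in Y) && aboveB w r' r]] = cnt (key w) F Y by [].
  apply/setP => r; rewrite /cnt !inE.
  congr (_ && (_ || ~~ _)); apply: eq_existsb => r'; by rewrite aboveB_key.
rewrite -addnA L2; last exact: key_inj.
by rewrite -mulnA mul2n -addnn.
Qed.

End Fiber.

Definition Phi (E : {set word}) (p b : nat) :=
  \sum_(w in E) \sum_(f | inT p w f) b ^ #|freeS p w f|.

Definition flipw (q : 'I_n) (w : word) : word :=
  [tuple if i == q then ~~ tnth w i else tnth w i | i < n].

Lemma stepS_flip (q : 'I_n) (w : word) (i : 'I_n) :
  stepS (flipw q w) i = if i == q then ~~ stepS w i else stepS w i.
Proof. by rewrite /stepS /flipw tnth_mktuple. Qed.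

Lemma flipK (q : 'I_n) : involutive (flipw q).
Proof.
move=> w; apply: eq_from_tnth => i; rewrite -/(stepS _ i) !stepS_flip.
by case: (i == q); rewrite ?negbK.
Qed.

Lemma flip_inj (q : 'I_n) : injective (flipw q).
Proof. exact: (can_inj (flipK q)). Qed.

Definition closedE (E : {set word}) (q : 'I_n) := forall w, (flipw q w \in E) = (w \in E).

Lemma sum_flip (E : {set word}) (q : 'I_n) (K : word -> nat) : closedE E q ->
  \sum_(w in E) K w = \sum_(w in E | stepS w q) (K w + K (flipw q w)).
Proof.
move=> hE; rewrite big_split /= (bigID (fun w => stepS w q)) /=; congr (_ + _).
rewrite (reindex_inj (@flip_inj q)) /=; apply: eq_bigl => w.
by rewrite hE stepS_flip eqxx negbK.
Qed.

Lemma flip_agree (q : 'I_n) (w : word) (i : 'I_n) : i < q -> stepS w i = stepS (flipw q w) i.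
Proof.
move=> h; rewrite stepS_flip; case: (eqVneq i q) => [e|//].
by move: h; rewrite e ltnn.
Qed.

Lemma Phi_flip (E : {set word}) (q : 'I_n) b : closedE E q ->
  Phi E q.+1 b = b * Phi E q b.+1.
Proof.
move=> hE; rewrite /Phi !(sum_flip _ hE) big_distrr /=.
apply: eq_bigr => w hw.
have hq : stepS w q by move: hw => /andP[].
have hq' : stepS (flipw q w) q = false by rewrite stepS_flip eqxx hq.
have ag : forall i : 'I_n, i < q -> stepS w i = stepS (flipw q w) i := @flip_agree q w.
rewrite -!(eq_bigl _ _ (inT_agree ag)).
under [X in _ = b * (_ + X)]eq_bigr => f _ do rewrite -(freeS_agree ag).
rewrite (eq_bigl _ _ (inT_S (w := w) (p := q) ^~ hq)).
rewrite (eq_bigr (fun f => b ^ (#|freeS q w f|).+1)); last by move=> f _; rewrite card_freeS_S.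
have := sumW hq' b.
rewrite -!(eq_bigl _ _ (inT_agree ag)).
under [X in _ + X = _]eq_bigr => f _ do rewrite -(freeS_agree ag).
under [X in _ = X]eq_bigr => f _ do rewrite -(freeS_agree ag).
rewrite addnC => ->; rewrite -big_split /= big_distrr /=; apply: eq_bigr => f _.
set x := _ ^ _; nia.
Qed.

Lemma Phi_forced (E : {set word}) (q : 'I_n) b : (forall w, w \in E -> stepS w q) ->
  Phi E q.+1 b = b * Phi E q b.
Proof.
move=> hE; rewrite /Phi big_distrr; apply: eq_bigr => w hw.
rewrite (eq_bigl _ _ (inT_S (w := w) (p := q) ^~ (hE w hw))) big_distrr.
by apply: eq_bigr => f _; rewrite card_freeS_S ?hE // expnS.
Qed.

Lemma Phi0 (E : {set word}) b : Phi E 0 b = #|E|.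
Proof.
rewrite -sum1_card /Phi; apply: eq_bigr => w _.
rewrite (big_pred1 [ffun => false]).
  suff -> : freeS 0 w [ffun => false] = set0 by rewrite cards0.
  by apply/setP => r; rewrite !inE.
move=> f; apply/idP/eqP.
  move=> /and4P[/forallP H _ _ _]; apply/ffunP => -[r c]; rewrite ffunE.
  by apply/negP => hf; move: (H r) => /forallP /(_ c) /implyP /(_ hf) /andP[_ /andP[]].
move=> ->; apply/and4P; split; apply/forallP => r.
- by apply/forallP => c; rewrite ffunE.
- by rewrite /colok ltn0.
- by apply/forallP => c; rewrite /colok ltn0.
- by apply/forallP => c; rewrite /colok ltn0.
Qed.

Lemma inT_n (w : word) (f : fill) : inT n w f = is_tabB (w, f).
Proof.
have cc r c : cellB w r c && colok n w c = cellB w r c.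
  by rewrite /colok ltn_ord /=; case h: (cellB w r c); rewrite //= (cell_W h).
rewrite /inT /is_tabB /=; congr [&& _, _, _ & _].
- by apply: eq_forallb => r; apply: eq_forallb => c; rewrite cc.
- by apply: eq_forallb => c; rewrite /colok ltn_ord.
- apply: eq_forallb => r; apply: eq_forallb => c.
  rewrite andbA (andbC (colok n w c)) cc; congr (_ ==> ~~ (_ && _)).
  by apply: eq_existsb => c'; rewrite (andbC (colok n w c')) cc.
- apply: eq_forallb => r; apply: eq_forallb => c.
  rewrite /colok ltn_ord /=.
  case hd: (diagB w r c); rewrite ?andbF //=.
  have -> : ~~ stepS w c by move: hd; rewrite /diagB => /andP[h /eqP <-].
  rewrite /=; congr (_ ==> _); apply: eq_forallb => c'.
  by rewrite -/(colok n w c') (andbC (colok n w c')) cc.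
Qed.

Lemma Phi_n (E : {set word}) :
  #|[set t : tabB n | (t.1 \in E) && is_tabB t]| = Phi E n 1.
Proof.
rewrite -sum1_card /Phi.
rewrite (eq_bigr (fun w => \sum_(f | inT n w f) 1)); last first.
  by move=> w _; apply: eq_bigr => f _; rewrite exp1n.
rewrite pair_big_dep /=; apply: eq_bigl => -[w f] /=.
by rewrite inE inT_n.
Qed.

Lemma Phi_chain (E : {set word}) p m b : p + m <= n ->
  (forall q : 'I_n, p <= q -> q < p + m -> closedE E q) ->
  Phi E (p + m) b = (\prod_(i < m) (b + i)) * Phi E p (b + m).
Proof.
elim: m b => [|m IH] b hpm hc; first by rewrite !addn0 big_ord0 mul1n.
have hq : p + m < n by rewrite -addnS.
have e1 : Phi E (p + m.+1) b = b * Phi E (p + m) b.+1.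
  rewrite addnS; apply: (Phi_flip (q := Ordinal hq)) => /=.
  by apply: hc => /=; rewrite ?leq_addr ?addnS.
rewrite e1 IH; first last.
- by move=> q h1 h2; apply: hc => //; rewrite addnS ltnS ltnW.
- exact: ltnW.
rewrite big_ord_recl /= addn0 mulnA addSnnS; congr (_ * _ * _).
by apply: eq_bigr => i _; rewrite addSnnS.
Qed.

Lemma card_half (E : {set word}) (q : 'I_n) : closedE E q ->
  #|E| = 2 * #|[set w in E | stepS w q]|.
Proof.
move=> hE; rewrite -!sum1_card (sum_flip (fun _ => 1) hE) big_distrr /=.
by apply: eq_bigl => w; rewrite !inE.
Qed.

End Main.

Lemma fact_chain a m : a`! * \prod_(i < m) (a.+1 + i) = (a + m)`!.
Proof.
elim: m => [|m IH]; first by rewrite big_ord0 muln1 addn0.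
by rewrite big_ord_recr /= mulnA IH addnS factS mulnC addSn.
Qed.

Import GRing.Theory Num.Theory.

Lemma closed_T n (q : 'I_n) : closedE [set: n.-tuple bool] q.
Proof. by move=> w; rewrite !inE. Qed.

Theorem mainTheorem8 (n k : nat) :
  (2 <= k)%N -> (k <= n)%N ->
  PB (S_ev n k :&: S_ev n k.-1) =
    (((n - k + 1) ^ 2)%:R / (4 * n * (n - 1))%:R)%R.
Proof.
move=> hk hkn.
have ha : k.-1 < n by rewrite prednK ?(leq_trans _ hk) //; apply: leq_trans hkn; rewrite leq_pred.
have ha' : k.-1 < n by lia.
have hb : k.-2 < n by lia.
pose a : 'I_n := Ordinal ha'.
pose bq : 'I_n := Ordinal hb.
have ab : (a == bq) = false by apply/negbTE; rewrite -val_eqE /=; lia.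
pose E1 := [set w in [set: n.-tuple bool] | stepS w a].
pose E := [set w in E1 | stepS w bq].
have hEset : (S_ev n k :&: S_ev n k.-1) :&: BTab n = [set t : tabB n | (t.1 \in E) && is_tabB t].
  apply/setP => t; rewrite !inE /stepS.
  rewrite (tnth_nth false t.1 a) (tnth_nth false t.1 bq) /=.
  by rewrite andbA.
have hB : BTab n = [set t : tabB n | (t.1 \in [set: n.-tuple bool]) && is_tabB t].
  by apply/setP => t; rewrite !inE.
rewrite /PB hEset hB !Phi_n.
have hT : Phi [set: n.-tuple bool] n 1 = n`! * 2 ^ n.
  have := @Phi_chain n [set: n.-tuple bool] 0 n 1 (leqnn n) (fun q _ _ => closed_T q).
  rewrite !add0n => ->; rewrite Phi0 cardsT card_tuple card_bool.
  by rewrite -(fact_chain 0 n) fact0 mul1n.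
have closedE_E (q : 'I_n) : q != a -> q != bq -> closedE E q.
  move=> qa qb w; rewrite !inE !stepS_flip.
  by rewrite eq_sym (negbTE qa) eq_sym (negbTE qb).
set j := (n - k).+1.
have hE1 : Phi E n 1 = (n - k)`! * Phi E k j.
  have := @Phi_chain n E k (n - k) 1 _ _.
  rewrite subnKC // add1n => -> //.
    by rewrite -(fact_chain 0 (n - k)) fact0 mul1n.
  move=> q h1 h2; apply: closedE_E; rewrite -val_eqE /=; lia.
have hE2 : Phi E k j = j * (j * Phi E k.-2 j).
  have e1 : k = a.+1 by rewrite /= prednK //; lia.
  have e2 : (nat_of_ord a) = bq.+1 by rewrite /=; lia.
  rewrite {1}e1 Phi_forced; last by move=> w; rewrite !inE => /andP[/andP[]].
  rewrite e2 Phi_forced //; by move=> w; rewrite !inE => /andP[].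
have hE3 : Phi E k.-2 j = (\prod_(i < k.-2) (j + i)) * #|E|.
  have := @Phi_chain n E 0 k.-2 j _ _.
  rewrite !add0n Phi0 => -> //; first lia.
  move=> q h1 h2; apply: closedE_E; rewrite -val_eqE /=; lia.
have hc1 : #|[set: n.-tuple bool]| = 2 * #|E1| by apply: card_half; exact: closed_T.
have hc2 : #|E1| = 2 * #|E|.
  apply: card_half => w; rewrite !inE stepS_flip.
  by rewrite ab.
move: hc1; rewrite cardsT card_tuple card_bool hc2 => hc.
have hfact : (n - k)`! * \prod_(i < k.-2) (j + i) = (n - 2)`!.
  rewrite fact_chain; congr (_ `!); lia.
rewrite hE1 hE2 hE3 hT.
have hn : n = (n - 2).+2 by lia.
have nz1 : ((n`! * 2 ^ n)%:R != 0 :> rat)%R.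
  by rewrite pnatr_eq0 muln_eq0 negb_or -!lt0n fact_gt0 expn_gt0.
have nz2 : ((4 * n * (n - 1))%:R != 0 :> rat)%R.
  by rewrite pnatr_eq0 !muln_eq0; apply/negP; lia.
apply/eqP; rewrite GRing.eqr_div // -!natrM eqr_nat; apply/eqP.
have hnf : n`! = n * (n - 1) * (n - 2)`!.
  rewrite {1}hn factS factS; have -> : n - 1 = (n - 2).+1 by lia.
  by rewrite -hn mulnA.
rewrite hnf hc addn1 -/j -hfact.
ring.
Qed.
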